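(* Let $M\ge2$ be an integer and consider the class of random variables $X$ whose distribution is unimodal with support contained in $\{1,\dots,M\}$. Within this class, $\nu_1(X)\le\frac{M-1}{4}$, and equality holds if and only if $X$ is uniformly distributed on $\{1,\dots,M\}$.
   Context: For a real random variable $X$, its Lévy concentration function is $Q_X(\varepsilon)=\sup_{x_0\in\mathbb{R}}\Pr\{X\in[x_0,x_0+\varepsilon]\}$, $\varepsilon>0$, and $Q_X(0):=\lim_{\varepsilon\downarrow0}Q_X(\varepsilon)=\max_k\Pr(X=k)$. For integer-valued $X$, $\nu_1(X)=\frac12\int_0^\infty(1-Q_X(\varepsilon))\,d\varepsilon=\frac12\sum_{k=0}^\infty(1-Q_X(k))$. A distribution $p$ on the integers is unimodal if there exists an integer $m$ with $p_k\ge p_{k-1}$ for all $k\le m$ and $p_{k+1}\le p_k$ for all $k\ge m$. *)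

(* Defs.v *)
From HB Require Import structures.
From mathcomp Require Import all_boot all_order all_algebra.
From mathcomp Require Import all_classical all_reals all_analysis.
Set Implicit Arguments. Unset Strict Implicit. Unset Printing Implicit Defensive.
Import Order.TTheory GRing.Theory Num.Theory.
Local Open Scope ring_scope.
Local Open Scope classical_set_scope.

(* A probability mass function p on the integers: p k = Pr(X = k). *)
Definition is_pmf_supp (R : realType) (M : nat) (p : int -> R) : Prop :=
  (forall k, 0 <= p k) /\
  (forall k : int, ~ (1 <= k <= M%:Z) -> p k = 0) /\
  \sum_(0 <= i < M.+1) p i%:Z = 1.

Definition unimodal (R : realType) (p : int -> R) : Prop :=
  exists m : int, (forall k : int, k <= m -> p (k - 1) <= p k) /\
                  (forall k : int, m <= k -> p (k + 1) <= p k).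

Definition window_mass (R : realType) (p : int -> R) (x0 : int) (k : nat) : R :=
  \sum_(0 <= i < k.+1) p (x0 + i%:Z).

(* Levy concentration function at integer eps = k (sup over windows; for an
   integer-valued X, integer left endpoints suffice). *)
Definition levyQ (R : realType) (p : int -> R) (k : nat) : R :=
  sup [set y | exists x0 : int, y = window_mass p x0 k].

Definition nu1 (R : realType) (p : int -> R) : R :=
  2^-1 * limn (fun n => \sum_(0 <= k < n) (1 - levyQ p k)).

(* Main.v *)
Require Import Defs.
From HB Require Import structures.
From mathcomp Require Import all_boot all_order all_algebra.
From mathcomp Require Import all_classical all_reals all_analysis.
From mathcomp Require Import zify ring lra.
Import Order.TTheory GRing.Theory Num.Theory.
Import numFieldNormedType.Exports.
Local Open Scope ring_scope.

Lemma sum_widen (R : realType) (f : nat -> R) n m :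
  (forall i, 0 <= f i) -> (n <= m)%N ->
  \sum_(0 <= i < n) f i <= \sum_(0 <= i < m) f i.
Proof.
move=> f0 nm; rewrite (@big_cat_nat _ _ _ n 0 m) //= lerDl.
by apply: sumr_ge0 => i _.
Qed.

Lemma win_nonneg (R : realType) (M : nat) (p : int -> R) :
  is_pmf_supp M p -> forall (a n : nat),
  \sum_(0 <= i < n) p (a%:Z + i%:Z) <= 1.
Proof.
move=> [p0 [pout p1]] a n.
have -> : \sum_(0 <= i < n) p (a%:Z + i%:Z) = \sum_(a <= i < a + n) p i%:Z.
  rewrite (big_addn 0 _ a) addKn; apply: eq_bigr => i _; congr p; lia.
apply: (le_trans (y := \sum_(0 <= i < a + n) p i%:Z)).
  rewrite [X in _ <= X](@big_cat_nat _ _ _ a 0 (a + n)) ?leq_addr //= lerDr.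
  by apply: sumr_ge0 => i _.
apply: (le_trans (y := \sum_(0 <= i < maxn (a + n) M.+1) p i%:Z)).
  by apply: (@sum_widen R (fun i => p i%:Z)) => //; exact: leq_maxl.
rewrite (@big_cat_nat _ _ _ M.+1 0 (maxn (a + n) M.+1)) //=; last exact: leq_maxr.
rewrite p1 big_nat_cond big1 ?addr0 // => i /andP[/andP[Hi _] _].
apply: pout; lia.
Qed.

Lemma win_le1 (R : realType) (M : nat) (p : int -> R) :
  is_pmf_supp M p -> forall (x0 : int) (n : nat),
  \sum_(0 <= i < n) p (x0 + i%:Z) <= 1.
Proof.
move=> hp; have [p0 [pout p1]] := hp.
case=> [a|a] n; first exact: (@win_nonneg R M p hp a n).
apply: (le_trans (y := \sum_(0 <= i < a.+1 + n) p (Negz a + i%:Z))).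
  by apply: sum_widen => //; rewrite leq_addl.
rewrite (@big_cat_nat _ _ _ a.+1 0 (a.+1 + n)) ?leq_addr //=.
rewrite big_nat_cond big1 ?add0r; last first.
  move=> i /andP[/andP[_ Hi] _]; apply: pout; rewrite NegzE; lia.
rewrite (big_addn 0 _ a.+1) addKn.
have -> : \sum_(0 <= i < n) p (Negz a + (i + a.+1)%N%:Z) =
          \sum_(0 <= i < n) p (0%N%:Z + i%:Z).
  apply: eq_bigr => i _; congr p; rewrite NegzE; lia.
exact: (@win_nonneg R M p hp 0 n).
Qed.

Lemma mono_up (R : realType) (p : int -> R) (m : int) :
  (forall k : int, k <= m -> p (k - 1) <= p k) ->
  forall (d : nat) (a : int), a + d%:Z <= m -> p a <= p (a + d%:Z).
Proof.
move=> hu; elim=> [|d IH] a H; first by rewrite addr0.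
apply: (le_trans (IH a _)); first lia.
have := hu (a + d.+1%:Z) H.
have -> : a + d.+1%:Z - 1 = a + d%:Z by lia.
by [].
Qed.

Lemma mono_down (R : realType) (p : int -> R) (m : int) :
  (forall k : int, m <= k -> p (k + 1) <= p k) ->
  forall (d : nat) (a : int), m <= a -> p (a + d%:Z) <= p a.
Proof.
move=> hd; elim=> [|d IH] a H; first by rewrite addr0.
apply: le_trans (IH a H).
have := hd (a + d%:Z) ltac:(lia).
have -> : a + d%:Z + 1 = a + d.+1%:Z by lia.
by [].
Qed.

Lemma min_lemma (R : realType) (p : int -> R) :
  unimodal p -> forall (lo : int) (d i : nat), (i <= d)%N ->
  p lo <= p (lo + i%:Z) \/ p (lo + d%:Z) <= p (lo + i%:Z).
Proof.
move=> [m [hu hd]] lo d i id.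
case: (lerP (lo + i%:Z) m) => H.
  by left; apply: (@mono_up R p m hu).
right.
have -> : lo + d%:Z = (lo + i%:Z) + (d - i)%N%:Z by lia.
apply: (@mono_down R p m hd); lia.
Qed.

Lemma alg_aux (R : realType) (L n a S : R) :
  0 < n -> 0 <= L -> n * a <= S ->
  L / (n + 1) * (a + S) <= L / n * S.
Proof.
move=> n0 L0 H; rewrite -subr_ge0.
have -> : L / n * S - L / (n + 1) * (a + S) = L * (S - n * a) / (n * (n + 1)).
  by field; apply/andP; split; rewrite ?gt_eqF //; rewrite ltr_wpDr.
apply: divr_ge0; first by apply: mulr_ge0 => //; rewrite subr_ge0.
by apply: mulr_ge0; apply: ltW => //; rewrite ltr_wpDr.
Qed.

Lemma win_exists (R : realType) (p : int -> R) :
  (forall k, 0 <= p k) -> unimodal p ->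
  forall (n : nat) (lo : int) (L : nat), (0 < L)%N -> (L <= n)%N ->
  exists x0 : int, L%:R / n%:R * \sum_(0 <= i < n) p (lo + i%:Z)
                   <= \sum_(0 <= i < L) p (x0 + i%:Z).
Proof.
move=> p0 hu; elim=> [|n IH] lo L L0 Ln; first by move: L0 Ln; case: L.
case: (ltngtP L n.+1) => HL; last 2 first.
- by move: Ln; rewrite leqNgt HL.
- by exists lo; rewrite HL divff ?mul1r // pnatr_eq0.
have Ln' : (L <= n)%N by [].
have n0 : (0 < n)%N by apply: leq_trans Ln'.
have hn : (0 : R) < n%:R by rewrite ltr0n.
case: (lerP (p lo) (p (lo + n%:Z))) => Hc.
- have [x0 Hx] := IH (lo + 1) L L0 Ln'.
  exists x0; apply: le_trans Hx.
  rewrite big_nat_recl //= addr0 -natr1.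
  have -> : \sum_(0 <= i < n) p (lo + i.+1%:Z) = \sum_(0 <= i < n) p (lo + 1 + i%:Z).
    by apply: eq_bigr => i _; congr p; lia.
  apply: alg_aux => //.
  apply: (le_trans (y := \sum_(0 <= i < n) p lo)).
    by rewrite sumr_const_nat subn0 mulr_natl.
  rewrite big_nat_cond [X in _ <= X]big_nat_cond; apply: ler_sum => i /andP[/andP[_ Hi] _].
  have -> : lo + 1 + i%:Z = lo + i.+1%:Z by lia.
  have [//|h] := @min_lemma R p hu lo n i.+1 Hi.
  exact: le_trans Hc h.
- have [x0 Hx] := IH lo L L0 Ln'.
  exists x0; apply: le_trans Hx.
  rewrite big_nat_recr //= -natr1 addrC.
  apply: alg_aux => //.
  apply: (le_trans (y := \sum_(0 <= i < n) p (lo + n%:Z))).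
    by rewrite sumr_const_nat subn0 mulr_natl.
  rewrite [X in X <= _]big_nat_cond [X in _ <= X]big_nat_cond; apply: ler_sum => i /andP[/andP[_ Hi] _].
  have [h|//] := @min_lemma R p hu lo n i (ltnW Hi).
  exact: le_trans (ltW Hc) h.
Qed.

Lemma Q_ge (R : realType) (M : nat) (p : int -> R) :
  is_pmf_supp M p -> forall x0 k, window_mass p x0 k <= levyQ p k.
Proof.
move=> hp x0 k; rewrite /levyQ; apply: ub_le_sup; last by exists x0.
by exists 1 => y [z ->]; exact: (@win_le1 R M p hp).
Qed.

Lemma Q_le (R : realType) (p : int -> R) k (b : R) :
  (forall x0, window_mass p x0 k <= b) -> levyQ p k <= b.
Proof.
move=> H; rewrite /levyQ; apply: ge_sup; first by exists (window_mass p 0 k), 0.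
by move=> y [z ->].
Qed.

Lemma tri (R : realType) (m : nat) :
  \sum_(0 <= k < m) (k.+1%:R : R) = m%:R * (m%:R + 1) / 2.
Proof.
elim: m => [|m IH]; first by rewrite big_geq // mul0r mul0r.
rewrite big_nat_recr //= IH -!natr1; by field.
Qed.

Theorem mainTheorem16 (R : realType) (M : nat) (p : int -> R) :
  (2 <= M)%N -> is_pmf_supp M p -> unimodal p ->
  nu1 p <= (M%:R - 1) / 4 /\
  (nu1 p = (M%:R - 1) / 4 <->
     forall k : int, 1 <= k <= M%:Z -> p k = M%:R^-1).
Proof.
move=> M2 hp hu; have [p0 [pout p1]] := hp.
set n := M.-1.
have hM : M = n.+1 by rewrite /n; lia.
have n0 : (0 < n)%N by rewrite /n; lia.
have hMR : M%:R = n%:R + 1 :> R by rewrite hM natr1.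
have hMR0 : M%:R != 0 :> R by rewrite pnatr_eq0; lia.
have sum1 : \sum_(0 <= i < M) p (1 + i%:Z) = 1.
  rewrite -p1 (big_nat_recl M 0) // pout ?add0r; last by [].
  by apply: eq_bigr => i _; congr p; lia.
have Qlow : forall k, (k < M)%N -> k.+1%:R / M%:R <= levyQ p k.
  move=> k kM.
  have [x0 Hx] := @win_exists R p p0 hu M 1 k.+1 erefl kM.
  rewrite sum1 mulr1 in Hx.
  exact: le_trans Hx (@Q_ge R M p hp x0 k).
have Qtop : forall k, (n <= k)%N -> levyQ p k = 1.
  move=> k nk; apply/le_anti/andP; split.
    by apply: Q_le => x0; exact: (@win_le1 R M p hp).
  rewrite -{1}sum1; apply: le_trans (@Q_ge R M p hp 1 k).
  rewrite /window_mass; apply: (@sum_widen R (fun i => p (1 + i%:Z))) => //.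
  by rewrite hM.
set u := fun m => \sum_(0 <= k < m) (1 - levyQ p k).
have hlim : limn u = u n.
  have h : \forall m \near eventually, u m = u n.
    exists n => // m /= Hm; rewrite /u (@big_cat_nat _ _ _ n 0 m) //=.
    rewrite [X in _ + X = _]big_nat_cond [X in _ + X = _]big1 ?addr0 // => k /andP[/andP[hk _] _].
    by rewrite Qtop // subrr.
  exact: (lim_near_cst _ h).
have hnu : nu1 p = 2^-1 * u n by rewrite /nu1 -/u hlim.
have G : \sum_(0 <= k < n) (1 - k.+1%:R / M%:R) = (M%:R - 1) / 2 :> R.
  rewrite sumrB sumr_const_nat subn0 -mulr_suml tri hMR.
  field; rewrite -hMR //.
set D := \sum_(0 <= k < n) (levyQ p k - k.+1%:R / M%:R).
have hD0 : 0 <= D.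
  rewrite /D big_nat_cond; apply: sumr_ge0 => k /andP[/andP[_ hk] _]; rewrite subr_ge0; apply: Qlow; lia.
have hT : u n = (M%:R - 1) / 2 - D.
  rewrite -G /D -sumrB; apply: eq_bigr => k _; ring.
split.
  rewrite hnu hT; lra.
split.
- move=> heq.
  have D0 : D = 0 by move: heq; rewrite hnu hT; lra.
  move: D0; rewrite /D big_mkord => D0.
  have nn : forall i : 'I_n, predT i -> 0 <= levyQ p i - i.+1%:R / M%:R.
    move=> i _; rewrite subr_ge0; apply: Qlow; have := ltn_ord i; lia.
  have := @psumr_eq0P R _ predT _ nn D0 (Ordinal n0) erefl.
  move=> /= /eqP; rewrite subr_eq0 => /eqP hQ0.
  have pj : forall j, p j <= M%:R^-1.
    move=> j; have := @Q_ge R M p hp j 0%N.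
    rewrite /window_mass big_nat1 hQ0.
    have -> : j + Posz 0 = j by rewrite addr0.
    by rewrite mulr1n mul1r.
  have E : \sum_(0 <= i < M) (M%:R^-1 - p (1 + i%:Z)) = 0.
    by rewrite sumrB sumr_const_nat subn0 sum1 -[M%:R^-1 *+ M]mulr_natr mulVf // subrr.
  move: E; rewrite big_mkord => E.
  have nn2 : forall i : 'I_M, predT i -> 0 <= M%:R^-1 - p (1 + (nat_of_ord i)%:Z).
    by move=> i _; rewrite subr_ge0.
  move=> [j|j] /andP[h1 h2]; last by move: h1; rewrite NegzE; lia.
  have jM : (j.-1 < M)%N by lia.
  have := @psumr_eq0P R _ predT _ nn2 E (Ordinal jM) erefl.
  move=> /= /eqP; rewrite subr_eq0 => /eqP ->; congr p; lia.
- move=> H.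
  have pj : forall j, p j <= M%:R^-1.
    move=> j; have [hj|hj] := boolP (1 <= j <= M%:Z); first by rewrite H.
    rewrite pout; [by rewrite invr_ge0 ler0n | exact/negP].
  have Qk : forall k, (k < M)%N -> levyQ p k = k.+1%:R / M%:R.
    move=> k kM; apply/le_anti/andP; split; last exact: Qlow.
    apply: Q_le => x0; rewrite /window_mass.
    apply: (le_trans (y := \sum_(0 <= i < k.+1) M%:R^-1)).
      by apply: ler_sum => i _; exact: pj.
    by rewrite sumr_const_nat subn0 -[M%:R^-1 *+ _]mulr_natl.
  have D0 : D = 0.
    rewrite /D big_nat_cond big1 // => k /andP[/andP[_ hk] _].
    rewrite Qk ?subrr //; lia.
  by rewrite hnu hT D0 subr0; field.
Qed.
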